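(* Let $g:\mathbb Z\to[0,\infty)$ and $\mu\in\mathbb R$, and define $G=\sum_{k\in\mathbb Z}g(k)$ and $J=\sum_{k\in\mathbb Z}(k-\mu)^2g(k)$. If $0<G<\infty$ and $0<J<\infty$, then $$\sup_{k\in\mathbb Z}g(k)\ge\frac{3G^{3/2}}{16\sqrt J+4\sqrt G}.$$ *)

(* Defs.v *)
From HB Require Import structures.
From mathcomp Require Import all_boot all_order all_algebra.
From mathcomp Require Import all_classical all_reals all_analysis.

(* Main.v *)
Require Import Defs.
From HB Require Import structures.
From mathcomp Require Import all_boot all_order all_algebra.
From mathcomp Require Import all_classical all_reals all_analysis.
From mathcomp Require Import zify ring lra.
Import Order.TTheory GRing.Theory Num.Theory.
Local Open Scope classical_set_scope.
Local Open Scope ring_scope.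

Lemma key_sum (R : realType) (s B : seq int) (M : R) (g h : int -> R) :
  uniq s -> 0 <= M ->
  (forall k, g k <= (if k \in B then M else 0) + h k) ->
  \sum_(k <- s) g k <= M * (size B)%:R + \sum_(k <- s) h k.
Proof.
move=> us M0 H.
apply: le_trans (ler_sum _ (fun k _ => H k)) _.
rewrite big_split /= lerD2r -big_mkcond /= big_const_seq.
have -> : forall m, iter m (+%R M) 0 = M *+ m by elim=> //= m ->; rewrite mulrS.
rewrite -[M *+ _]mulr_natr; apply: ler_wpM2l => //; rewrite ler_nat.
rewrite -size_filter; apply: uniq_leq_size.
  exact: filter_uniq.
by move=> x; rewrite mem_filter => /andP[].
Qed.

Theorem lemma7 (R : realType) (g : int -> R) (mu G J : R)
  (g_ge0 : forall k, 0 <= g k)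
  (defG : (\esum_(k in [set: int]) (g k)%:E)%E = G%:E)
  (defJ : (\esum_(k in [set: int]) (((k%:~R - mu) ^+ 2 * g k)%:E))%E = J%:E)
  (G_gt0 : 0 < G) (J_gt0 : 0 < J) :
  (((3 * G * Num.sqrt G) / (16 * Num.sqrt J + 4 * Num.sqrt G))%:E
    <= ereal_sup (range (fun k => (g k)%:E)))%E.
Proof.
set S := ereal_sup _.
have gS : forall k, ((g k)%:E <= S)%E.
  by move=> k; apply: ereal_sup_ubound; exists k.
have : (0 <= S)%E by apply: le_trans (gS 0); rewrite lee_fin.
case: S gS => [M||] gS // M0; last by rewrite leey.
rewrite lee_fin in M0.
have gM : forall k, g k <= M by move=> k; have := gS k; rewrite lee_fin.
rewrite lee_fin.
set r := Num.sqrt J; set q := Num.sqrt G.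
have r0 : 0 < r by rewrite sqrtr_gt0.
have q0 : 0 < q by rewrite sqrtr_gt0.
have rr : r ^+ 2 = J by rewrite sqr_sqrtr // ltW.
have qq : q ^+ 2 = G by rewrite sqr_sqrtr // ltW.
set t := 2 * r / q.
have t0 : 0 < t by rewrite /t divr_gt0 // mulr_gt0.
set a := Num.floor (mu - t).
set n := (`|Num.floor (2 * t)|%N).+1.
set B := [seq a + 1 + j%:Z | j <- iota 0 n].
have HB : forall k : int, (k%:~R - mu) ^+ 2 < t ^+ 2 -> k \in B.
  move=> k hk.
  have h1 : k%:~R - mu < t by nra.
  have h2 : - t < k%:~R - mu by nra.
  have ha := floor_le (mu - t).
  have ha1 := floorD1_gt (mu - t).
  have ak : a < k by rewrite -(ltr_int R); rewrite -/a in ha; lra.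
  have kb : k - a - 1 <= Num.floor (2 * t).
    rewrite floor_ge_int; rewrite -/a in ha1.
    rewrite !intrD !intrN in ha1 *; lra.
  have f0 : 0 <= Num.floor (2 * t).
    by rewrite floor_ge_int; apply: ltW; rewrite mulr_gt0.
  apply/mapP; exists `|(k - a - 1)%R|%N; last by lia.
  rewrite mem_iota /n; lia.
have pw : forall k, g k <= (if k \in B then M else 0)
                          + (k%:~R - mu) ^+ 2 * g k / t ^+ 2.
  move=> k; case: ifP => kB.
    rewrite -[X in X <= _]addr0 lerD //.
    by apply: divr_ge0; [apply: mulr_ge0; [exact: sqr_ge0|done] | exact: sqr_ge0].
  rewrite add0r ler_pdivlMr ?exprn_gt0 // mulrC ler_wpM2r //.
  by rewrite leNgt; apply/negP => /HB; rewrite kB.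
have sizeB : size B = n by rewrite size_map size_iota.
have main : G <= M * n%:R + J / t ^+ 2.
  rewrite -lee_fin -defG; apply: ge_ereal_sup => _ [X [finX _] <-].
  rewrite fsbig_finite // sumEFin lee_fin.
  apply: le_trans (key_sum _ _ _ _ _ _ (finmap.fset_uniq _) M0 pw) _.
  rewrite sizeB lerD2l -mulr_suml ler_pM2r ?invr_gt0 ?exprn_gt0 //.
  rewrite -lee_fin -defJ -sumEFin -fsbig_finite //.
  by apply: ereal_sup_ubound; exists X.
have nle : n%:R <= 2 * t + 1.
  rewrite /n -addn1 natrD lerD2r.
  have f0 : 0 <= Num.floor (2 * t).
    by rewrite floor_ge_int; apply: ltW; rewrite mulr_gt0.
  by rewrite natr_absz ger0_norm //; exact: floor_le.
have Jt : J / t ^+ 2 = G / 4.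
  rewrite /t -rr -qq; field; apply/andP; split; apply: lt0r_neq0 => //.
have key2 : 3 * G <= M * (4 * (2 * t + 1)).
  have := ler_wpM2l M0 nle; rewrite Jt in main; nra.
have e : M * (4 * (2 * t + 1)) = M * (16 * r + 4 * q) / q.
  by rewrite /t; field; apply: lt0r_neq0.
rewrite e ler_pdivlMr // in key2.
rewrite ler_pdivrMr; last by rewrite addr_gt0 // mulr_gt0.
exact: key2.
Qed.
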